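(* Let $\Omega$ be a metrizable separable space and $c$ a capacity on $\mathcal{L}$, extended to all real functions on $\Omega$. (i) For every open $V\subset\Omega$ there is an increasing sequence of non-negative continuous functions $h_n$ with $1_V=\lim_n h_n$ and $c(1_V)=\lim_n c(h_n)$. (ii) For every closed $F\subset\Omega$ there is a decreasing sequence of continuous functions $g_n\le1$ with $1_F=\lim_n g_n$ and $c(1_F)=\lim_n c(g_n)$.
   Context: $\mathcal{L}\subset\mathcal{C}_b(\Omega)$ is a linear subspace which is a vector lattice, contains the constants and generates the topology of $\Omega$. A capacity on $\mathcal{L}$ is a seminorm $c$ with $c(f)\le c(g)$ whenever $|f|\le|g|$, and $\inf_n c(f_n)=0$ for every sequence $f_n\in\mathcal{L}$ decreasing pointwise to $0$. It is extended to all real functions by $c(f)=\sup\{c(\varphi):\varphi\in\mathcal{L},0\le\varphi\le f\}$ for $f\ge0$ lower semicontinuous and $c(g)=\inf\{c(f):f\text{ l.s.c.},f\ge|g|\}$ for arbitrary $g$. *)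

(* Defs.v *)
From HB Require Import structures.
From mathcomp Require Import all_boot all_order all_algebra.
From mathcomp Require Import all_classical all_reals all_analysis.
Set Implicit Arguments. Unset Strict Implicit. Unset Printing Implicit Defensive.
Import Order.TTheory GRing.Theory Num.Theory numFieldTopology.Exports numFieldNormedType.Exports.
Local Open Scope classical_set_scope.
Local Open Scope ring_scope.

Section defs.
Context {R : realType} {T : topologicalType}.

Definition metrizable_space : Prop :=
  exists d : T -> T -> R,
    [/\ (forall x y, 0 <= d x y), (forall x y, d x y = 0 <-> x = y),
        (forall x y, d x y = d y x),
        (forall x y z, d x z <= d x y + d y z) &
        (forall A : set T, open A <->
           (forall x, A x -> exists2 e : R, 0 < e & [set y | d x y < e] `<=` A))].

Definition separable_space : Prop :=
  exists D : set T, countable D /\ closure D = setT.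

Definition Cb_lattice (L : set (T -> R)) : Prop :=
  [/\ (forall f, L f -> continuous f /\ exists M : R, forall x, `|f x| <= M),
      (forall f g, L f -> L g -> L (f \+ g)),
      (forall (a : R) f, L f -> L (fun x => a * f x)),
      (forall f g, L f -> L g -> L (fun x => Num.max (f x) (g x))) &
      (forall a : R, L (fun _ => a))].

Definition generates_topology (L : set (T -> R)) : Prop :=
  forall U : set T, open U -> forall x, U x ->
    exists s : seq (T -> R), (forall f, f \in s -> L f) /\
      exists2 e : R, 0 < e &
        [set y | forall f, f \in s -> `|f y - f x| < e] `<=` U.

Definition capacity (L : set (T -> R)) (c : (T -> R) -> R) : Prop :=
  [/\ (forall f g, L f -> L g -> c (f \+ g) <= c f + c g),
      (forall (a : R) f, L f -> c (fun x => a * f x) = `|a| * c f),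
      (forall f g, L f -> L g -> (forall x, `|f x| <= `|g x|) -> c f <= c g) &
      (forall fn : nat -> T -> R, (forall n, L (fn n)) ->
         (forall n x, fn n.+1 x <= fn n x) ->
         (forall x, fn n x @[n --> \oo] --> 0) ->
         inf (range (fun n => c (fn n))) = 0)].

Local Open Scope ereal_scope.

(* c(f) for f >= 0 lower semicontinuous *)
Definition cap_lsc (L : set (T -> R)) (c : (T -> R) -> R) (f : T -> R) : \bar R :=
  ereal_sup [set (c phi)%:E | phi in
               [set phi | L phi /\ forall x, (0 <= phi x <= f x)%R]].

Definition cap_ext (L : set (T -> R)) (c : (T -> R) -> R) (g : T -> R) : \bar R :=
  ereal_inf [set cap_lsc L c f | f in
               [set f | lower_semicontinuous (fun x => (f x)%:E) /\
                        forall x, (`|g x| <= f x)%R]].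
End defs.

(* Main.v *)
Require Import Defs.
From HB Require Import structures.
From mathcomp Require Import all_boot all_order all_algebra.
From mathcomp Require Import all_classical all_reals all_analysis.
From mathcomp Require Import lra.
Import Order.TTheory GRing.Theory Num.Theory numFieldTopology.Exports numFieldNormedType.Exports.
Local Open Scope classical_set_scope.
Local Open Scope ring_scope.

Fixpoint runmax {R : realType} {T : Type} (a : nat -> T -> R) (n : nat) : T -> R :=
  match n with 0%N => a 0%N | m.+1 => fun x => Num.max (runmax a m x) (a m.+1 x) end.
Fixpoint runmin {R : realType} {T : Type} (a : nat -> T -> R) (n : nat) : T -> R :=
  match n with 0%N => a 0%N | m.+1 => fun x => Num.min (runmin a m x) (a m.+1 x) end.

Section run.
Context {R : realType} {T : topologicalType}.
Implicit Types a : nat -> T -> R.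

Lemma runmax_ge a n x : a n x <= runmax a n x.
Proof. by case: n => [|n] //=; rewrite le_max lexx orbT. Qed.
Lemma runmax_mono a n x : runmax a n x <= runmax a n.+1 x.
Proof. by rewrite /= le_max lexx. Qed.
Lemma runmax_ub a (b : T -> R) n x : (forall m, a m x <= b x) -> runmax a n x <= b x.
Proof. by move=> H; elim: n => [|n IH] //=; rewrite ge_max IH H. Qed.
Lemma runmax_cont a n : (forall m, continuous (a m)) -> continuous (runmax a n).
Proof. move=> H; elim: n => [|n IH] //=; exact: max_fun_continuous. Qed.

Lemma runmin_le a n x : runmin a n x <= a n x.
Proof. by case: n => [|n] //=; rewrite ge_min lexx orbT. Qed.
Lemma runmin_mono a n x : runmin a n.+1 x <= runmin a n x.
Proof. by rewrite /= ge_min lexx. Qed.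
Lemma runmin_lb a (b : T -> R) n x : (forall m, b x <= a m x) -> b x <= runmin a n x.
Proof. by move=> H; elim: n => [|n IH] //=; rewrite le_min IH H. Qed.
Lemma runmin_cont a n : (forall m, continuous (a m)) -> continuous (runmin a n).
Proof. move=> H; elim: n => [|n IH] //=; exact: min_fun_continuous. Qed.
End run.


Section lsc.
Context {R : realType} {T : topologicalType}.
Local Open Scope ereal_scope.

Lemma lsc_indic (V : set T) : open V -> lower_semicontinuous (fun x => (\1_V x : R)%:E).
Proof.
move=> oV x a; rewrite lte_fin => ax; have [Vx|Vx] := pselect (V x).
  exists V; first by apply: open_nbhs_nbhs; split.
  move=> y Vy; rewrite lte_fin indicE mem_set //; by rewrite indicE mem_set in ax.
exists setT; first exact: filterT.
move=> y _; rewrite lte_fin; rewrite indicE memNset // in ax.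
by apply: lt_le_trans ax _; rewrite indicE ler0n.
Qed.

Lemma lsc_cont (h : T -> R) : continuous h -> lower_semicontinuous (fun x => (h x)%:E).
Proof.
move=> ch x a; rewrite lte_fin => ax.
exists [set y | (a < h y)%R]; last by move=> y; rewrite lte_fin.
exact: (cvgr_gt _ (ch x)).
Qed.

Lemma indic_01 (A : set T) x : (0 <= (\1_A x : R) <= 1)%R.
Proof. by rewrite indicE; case: (x \in A); rewrite /= ?lexx ?ler01. Qed.
End lsc.

Section main.
Context {R : realType} {T : topologicalType} (d : T -> T -> R)
  (L : set (T -> R)) (c : (T -> R) -> R).
Hypothesis HL : Cb_lattice L.
Hypothesis Hc : capacity L c.
Hypothesis d0 : forall x y, 0 <= d x y.
Hypothesis dE : forall x y, d x y = 0 <-> x = y.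
Hypothesis dC : forall x y, d x y = d y x.
Hypothesis dT : forall x y z, d x z <= d x y + d y z.
Hypothesis dO : forall A : set T, open A <->
           (forall x, A x -> exists2 e : R, 0 < e & [set y | d x y < e] `<=` A).

Lemma dxx x : d x x = 0. Proof. by apply/dE. Qed.

Lemma open_ball x e : open [set y | d x y < e].
Proof.
apply/dO => y /= hy; exists (e - d x y); first by rewrite subr_gt0.
move=> z /= hz; have := dT x y z; lra.
Qed.

Lemma nbhs_ball x e : 0 < e -> nbhs x [set y | d x y < e].
Proof. by move=> e0; apply: open_nbhs_nbhs; split; [exact: open_ball|rewrite /= dxx]. Qed.

Lemma lip_cont (g : T -> R) K : 0 < K ->
  (forall x y, `|g x - g y| <= K * d x y) -> continuous g.
Proof.
move=> K0 H x; apply/cvgrPdist_lt => eps ep.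
apply: filterS (nbhs_ball x (eps / K) _); last by rewrite divr_gt0.
move=> y /= hy; apply: le_lt_trans (H x y) _.
by rewrite mulrC -ltr_pdivlMr.
Qed.

Definition sdist (A : set T) x := inf [set d x y | y in A].

Lemma sdist_ge0 A x : 0 <= sdist A x.
Proof.
have [[y Ay]|A0] := pselect (A !=set0).
  by apply: lb_le_inf; [exists (d x y), y|move=> _ [z _ <-]].
have -> : A = set0 by apply/seteqP; split=> // z Az; apply: A0; exists z.
by rewrite /sdist image_set0 inf0.
Qed.

Lemma sdist_le A x y : A y -> sdist A x <= d x y.
Proof.
move=> Ay; apply: (ge_inf (E := [set d x y | y in A])); last by exists y.
by exists 0 => _ [z _ <-].
Qed.

Lemma sdist_glb A x r : A !=set0 -> (forall y, A y -> r <= d x y) -> r <= sdist A x.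
Proof.
move=> [y Ay] H; apply: lb_le_inf; first by exists (d x y), y.
by move=> _ [z Az <-]; exact: H.
Qed.

Lemma sdist_tri A x y : A !=set0 -> sdist A x <= d x y + sdist A y.
Proof.
move=> A0; rewrite -lerBlDl; apply: sdist_glb => // z Az.
rewrite lerBlDl; apply: le_trans (@sdist_le A x z Az) _; exact: dT.
Qed.

Lemma sdist_lip A x y : A !=set0 -> `|sdist A x - sdist A y| <= 1 * d x y.
Proof.
move=> A0; rewrite mul1r ler_norml; have := @sdist_tri A x y A0; have := @sdist_tri A y x A0.
rewrite (dC y x); lra.
Qed.

Lemma sdist_cont A : A !=set0 -> continuous (sdist A).
Proof. by move=> A0; apply: (@lip_cont _ 1) => // x y; exact: sdist_lip. Qed.

Lemma sdist0 A x : A x -> sdist A x = 0.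
Proof. by move=> Ax; apply/le_anti; rewrite sdist_ge0 andbT -(dxx x) sdist_le. Qed.

Lemma sdist_open_pos V x : open V -> V x -> (~` V) !=set0 -> 0 < sdist (~` V) x.
Proof.
move=> /dO oV Vx V0; have [e e0 He] := oV x Vx.
apply: lt_le_trans e0 _; apply: sdist_glb => // y Vy; rewrite leNgt; apply/negP => hy.
by apply: Vy; apply: He.
Qed.

Lemma open_sdist_lt A e : A !=set0 -> open [set x | sdist A x < e].
Proof.
move=> A0; apply/dO => y /= hy; exists (e - sdist A y); first by rewrite subr_gt0.
move=> z /= hz; have := @sdist_tri A z y A0; rewrite dC; lra.
Qed.

Lemma urysohn (F G : set T) : closed F -> F !=set0 -> open G -> F `<=` G ->
  exists k : T -> R, [/\ continuous k, (forall x, 0 <= k x <= 1),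
     (forall x, F x -> k x = 1) & (forall x, ~ G x -> k x = 0)].
Proof.
move=> cF F0 oG FG.
have [G0|G0] := pselect ((~` G) !=set0); last first.
  exists (fun _ => 1); split => //.
  - exact: cst_continuous.
  - by move=> x; rewrite ler01 lexx.
  - by move=> x Gx; exfalso; apply: G0; exists x.
pose a := sdist (~` G); pose b := sdist F.
have pos x : 0 < a x + b x.
  have [Gx|Gx] := pselect (G x).
    by apply: ltr_wpDr; [exact: sdist_ge0| exact: sdist_open_pos].
  apply: ltr_wpDl; first exact: sdist_ge0.
  have Fx : (~` F) x by move=> Fx; apply: Gx; apply: FG.
  have := @sdist_open_pos (~` F) x (closed_openC cF) Fx.
  by rewrite setCK; apply.

exists (fun x => a x / (a x + b x)); split.
- move=> x; apply: cvgM; first exact: sdist_cont.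
  apply: cvgV; first by rewrite gt_eqF.
  by apply: cvgD; exact: sdist_cont.
- move=> x; rewrite divr_ge0 ?sdist_ge0 ?(ltW (pos x)) //=.
  by rewrite ler_pdivrMr // mul1r lerDl sdist_ge0.
- move=> x Fx; rewrite /b sdist0 // addr0 divff // gt_eqF //.
  by have := pos x; rewrite /b sdist0 // addr0.
- by move=> x Gx; rewrite /a sdist0 // mul0r.
Qed.

Section capsec.
Lemma Lcst a : L (fun _ => a). Proof. by case: HL. Qed.
Lemma Lscale a f : L f -> L (fun x => a * f x). Proof. by case: HL => _ _ H _ _; apply: H. Qed.
Lemma Lmax f g : L f -> L g -> L (fun x => Num.max (f x) (g x)).
Proof. by case: HL => _ _ _ H _; apply: H. Qed.
Lemma Lcont f : L f -> continuous f. Proof. by case: HL => H _ _ _ _ /H []. Qed.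
Lemma c_hom a f : L f -> c (fun x => a * f x) = `|a| * c f.
Proof. by case: Hc => _ H _ _; apply: H. Qed.
Lemma c_mon f g : L f -> L g -> (forall x, `|f x| <= `|g x|) -> c f <= c g.
Proof. by case: Hc => _ _ H _; apply: H. Qed.

Lemma c_ge0 f : L f -> 0 <= c f.
Proof.
move=> Lf; have := @c_mon (fun x => 0 * f x) f (@Lscale 0 f Lf) Lf.
rewrite c_hom // normr0 mul0r; apply => x; by rewrite mul0r normr0.
Qed.


Local Open Scope ereal_scope.
Lemma cap_lsc_ge f phi : L phi -> (forall x, (0 <= phi x <= f x)%R) ->
  (c phi)%:E <= cap_lsc L c f.
Proof. by move=> Lp Hp; apply: ereal_sup_ubound; exists phi. Qed.

Lemma cap_lsc_le f g : (forall x, (f x <= g x)%R) -> cap_lsc L c f <= cap_lsc L c g.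
Proof.
move=> fg; apply: ereal_sup_le => _ [phi [Lp Hp] <-]; exists phi => //; split => // x.
by case/andP: (Hp x) => -> /le_trans; apply.
Qed.

Lemma cap_lsc_ub f M : (forall x, (f x <= M)%R) -> cap_lsc L c f <= (c (fun _ => M))%:E.
Proof.
move=> fM; apply: ge_ereal_sup => _ [phi [Lp Hp] <-]; rewrite lee_fin.
apply: c_mon => // [|x]; first exact: Lcst.
case/andP: (Hp x) => p0 pf; rewrite ger0_norm //.
exact: le_trans (le_trans pf (fM x)) (ler_norm _).
Qed.

Lemma cap_lsc_ge0 f : (forall x, (0 <= f x)%R) -> 0 <= cap_lsc L c f.
Proof.
move=> f0; apply: le_trans (@cap_lsc_ge f (fun _ => 0%R) (Lcst _) _).
  by rewrite lee_fin c_ge0 //; exact: Lcst.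
by move=> x; rewrite lexx f0.
Qed.

Lemma cap_lsc_scale f g (k M : R) : (0 < k)%R -> (forall x, (0 <= g x)%R) ->
  (forall x, (g x <= k * f x)%R) -> cap_lsc L c f <= M%:E ->
  cap_lsc L c g <= (k * M)%:E.
Proof.
move=> k0 g0 gkf fM; apply: ge_ereal_sup => _ [phi [Lp Hp] <-]; rewrite lee_fin.
pose psi := fun x => (k^-1 * phi x)%R.
have Lpsi : L psi by exact: Lscale.
have : (c psi)%:E <= M%:E.
  apply: le_trans fM; apply: cap_lsc_ge => // x; case/andP: (Hp x) => p0 pg.
  rewrite /psi mulr_ge0 ?invr_ge0 ?(ltW k0) //=.

  by rewrite ler_pdivrMl // (le_trans pg (gkf x)).
rewrite lee_fin /psi c_hom // ger0_norm ?invr_ge0 ?(ltW k0) // => h.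
by rewrite -ler_pdivrMl.
Qed.

Lemma cap_ext_le g f : lower_semicontinuous (fun x => (f x)%:E) ->
  (forall x, (`|g x| <= f x)%R) -> cap_ext L c g <= cap_lsc L c f.
Proof. by move=> lf gf; apply: ereal_inf_lbound; exists f. Qed.

Lemma cap_ext_lsc f : lower_semicontinuous (fun x => (f x)%:E) ->
  (forall x, (0 <= f x)%R) -> cap_ext L c f = cap_lsc L c f.
Proof.
move=> lf f0; apply/le_anti/andP; split.
  by apply: cap_ext_le => // x; rewrite ger0_norm.
apply: le_ereal_inf_tmp => _ [g [lg fg] <-]; apply: cap_lsc_le => x.
by apply: le_trans (fg x); rewrite ler_norm.
Qed.

Lemma cap_ext_mono g g' : (forall x, (`|g x| <= `|g' x|)%R) ->
  cap_ext L c g <= cap_ext L c g'.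
Proof.
move=> gg; rewrite /cap_ext; apply: le_ereal_inf => _ [f [lf fg] <-]; exists f => //; split => // x.
exact: le_trans (gg x) (fg x).
Qed.

Lemma cap_ext_ge0 g : 0 <= cap_ext L c g.
Proof.
apply: le_ereal_inf_tmp => _ [f [lf fg] <-]; apply: cap_lsc_ge0 => x.
exact: le_trans (fg x).
Qed.

End capsec.

Lemma indic_ge0 (A : set T) x : (0 <= (\1_A x : R))%R.
Proof. by have /andP[] := @indic_01 R T A x. Qed.
Lemma indic_le1 (A : set T) x : ((\1_A x : R) <= 1)%R.
Proof. by have /andP[] := @indic_01 R T A x. Qed.

Lemma part_u (V : set T) : open V ->
  exists u : nat -> T -> R, [/\ (forall n, continuous (u n)), (forall n x, 0 <= u n x),
    (forall n x, u n x <= \1_V x) & (forall x, u n x @[n --> \oo] --> (\1_V x : R))].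
Proof.
move=> oV; have [V0|V0] := pselect ((~` V) !=set0); last first.
  have VT x : V x by apply: contrapT => Vx; apply: V0; exists x.
  exists (fun _ _ => 1); split => //.
  - by move=> n; exact: cst_continuous.
  - by move=> n x; rewrite indicE mem_set.
  - by move=> x; rewrite indicE mem_set //; exact: cvg_cst.
exists (fun n x => Num.min 1 (sdist (~` V) x / harmonic n)); split.
- move=> n; apply: min_fun_continuous; first exact: cst_continuous.
  have hp : (0 < (harmonic n : R)^-1)%R by rewrite invr_gt0 harmonic_gt0.
  apply: (@lip_cont _ (harmonic n)^-1) => // x y.
  rewrite -mulrBl normrM (gtr0_norm hp) mulrC ler_wpM2l ?(ltW hp) //.
  by have := @sdist_lip _ x y V0; rewrite mul1r.
- by move=> n x; rewrite le_min ler01 divr_ge0 ?sdist_ge0 ?harmonic_ge0.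
- move=> n x; have [Vx|Vx] := pselect (V x).
    by rewrite indicE mem_set // ge_min lexx.
  by rewrite indicE memNset // sdist0 // mul0r ge_min lexx orbT.
- move=> x; have [Vx|Vx] := pselect (V x).
    rewrite indicE mem_set //; apply: cvg_near_cst.
    have rho0 := @sdist_open_pos _ x oV Vx V0.
    near=> n; apply: min_l; rewrite ler_pdivlMr ?harmonic_gt0 // mul1r ltW //.
    near: n; exact: (cvgr_lt _ cvg_harmonic).
  rewrite indicE memNset //; apply: cvg_near_cst; apply: nearW => n.
  by rewrite sdist0 // mul0r; apply: min_r; rewrite ler01.
Unshelve. all: end_near.
Qed.
Lemma fin_between (x : \bar R) (M : R) : (0 <= x)%E -> (x <= M%:E)%E -> exists r : R, x = r%:E.
Proof. by case: x => [r| |] // _ _; exists r. Qed.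

Lemma part_i (V : set T) : open V ->
  exists h : nat -> T -> R,
    [/\ (forall n, continuous (h n)),
        (forall n x, 0 <= h n x),
        (forall n x, h n x <= h n.+1 x),
        (forall x, h n x @[n --> \oo] --> (\1_V x : R)) &
        cap_ext L c (h n) @[n --> \oo] --> cap_ext L c (\1_V : T -> R)].
Proof.
move=> oV; have [u [uc u0 uV ucv]] := @part_u V oV.
have Ilsc : cap_ext L c (\1_V : T -> R) = cap_lsc L c \1_V.
  by apply: cap_ext_lsc; [exact: lsc_indic | exact: indic_ge0].
have [r Ir] : exists r : R, cap_ext L c (\1_V : T -> R) = r%:E.
  apply: (@fin_between _ (c (fun _ => 1))); first exact: cap_ext_ge0.
  by rewrite Ilsc; apply: cap_lsc_ub => x; exact: indic_le1.
have Hphi : forall n, exists phi, [/\ L phi, (forall x, 0 <= phi x <= \1_V x) &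
    ((r - harmonic n)%:E < (c phi)%:E)%E].
  move=> n.
  have fin : cap_lsc L c \1_V \is a fin_num by rewrite -Ilsc Ir.
  have fin2 := fin; rewrite /cap_lsc in fin2.
  have := ub_ereal_sup_adherent (@harmonic_gt0 R n) fin2.
  case=> _ [phi [Lp Hp] <-] hy.
  exists phi; split => //.
  by rewrite EFinB -Ir Ilsc.
have [phi Hp] := choice Hphi.
pose a n x := Num.max (u n x) (phi n x).
have a_u n x : u n x <= a n x by rewrite le_max lexx.
have a_p n x : phi n x <= a n x by rewrite le_max lexx orbT.
have aV n x : a n x <= \1_V x.
  by rewrite ge_max uV; case: (Hp n) => _ /(_ x) /andP[].
have h0 n x : 0 <= runmax a n x := le_trans (u0 n x) (le_trans (a_u n x) (runmax_ge a n x)).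
have hcont n : continuous (runmax a n).
  apply: runmax_cont => m; apply: max_fun_continuous; first exact: uc.
  by case: (Hp m) => Lp _ _; exact: Lcont.
exists (runmax a); split => //.
- by move=> n x; exact: runmax_mono.
- move=> x; apply: (squeeze_cvgr _ (ucv x) (cvg_cst _)); apply: nearW => n.
  by rewrite (le_trans (a_u n x) (runmax_ge a n x)) runmax_ub.
- rewrite Ir; apply: (@squeeze_cvge _ _ _ _ (fun n => (r - harmonic n)%:E) _ (fun _ => r%:E)).
  + apply: nearW => n; rewrite cap_ext_lsc; [|exact: lsc_cont|exact: h0].
    apply/andP; split.
      case: (Hp n) => Lp Hpx hy; apply: (le_trans (ltW hy)); apply: cap_lsc_ge => // x.
      by case/andP: (Hpx x) => -> _ /=; exact: le_trans (a_p n x) (runmax_ge a n x).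
    by rewrite -Ir Ilsc; apply: cap_lsc_le => x; apply: runmax_ub.
  + apply: cvg_EFin; first exact: nearW.
    have := cvgB (cvg_cst r) (@cvg_harmonic R); rewrite subr0; apply.
  + exact: cvg_cst.
Qed.
Lemma part_ii (F : set T) : closed F ->
  exists g : nat -> T -> R,
    [/\ (forall n, continuous (g n)),
        (forall n x, g n x <= 1),
        (forall n x, g n.+1 x <= g n x),
        (forall x, g n x @[n --> \oo] --> (\1_F x : R)) &
        cap_ext L c (g n) @[n --> \oo] --> cap_ext L c (\1_F : T -> R)].
Proof.
move=> cF; have [F0|F0] := pselect (F !=set0); last first.
  have FN x : ~ F x by move=> Fx; apply: F0; exists x.
  have -> : (\1_F : T -> R) = (fun _ => 0).
    by apply/funext => x; rewrite indicE memNset.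
  exists (fun _ _ => 0); split.
  - by move=> n; exact: cst_continuous.
  - by move=> n x; apply: (@ler01 R).
  - by move=> n x.
  - by move=> x; exact: cvg_cst.
  - exact: cvg_cst.
have [r Jr] : exists r : R, cap_ext L c (\1_F : T -> R) = r%:E.
  apply: (@fin_between _ (c (fun _ => 1))); first exact: cap_ext_ge0.
  have h1 : (cap_ext L c (\1_F : T -> R) <= cap_lsc L c (fun _ => 1%R))%E.
    apply: cap_ext_le; first by apply: lsc_cont; exact: cst_continuous.
    by move=> x; rewrite ger0_norm ?indic_ge0 ?indic_le1.
  apply: le_trans h1 _; exact: cap_lsc_ub.
have Hf : forall n, exists f : T -> R, [/\ lower_semicontinuous (fun x => (f x)%:E),
    (forall x, `|(\1_F x : R)| <= f x) & (cap_lsc L c f < (r + harmonic n)%:E)%E].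
  move=> n.
  have fin : cap_ext L c (\1_F : T -> R) \is a fin_num by rewrite Jr.
  have fin2 := fin; rewrite /cap_ext in fin2.
  have := lb_ereal_inf_adherent (@harmonic_gt0 R n) fin2.
  case=> _ [f [lf fF] <-] hy; exists f; split => //.
  by rewrite EFinD -Jr.
have [f Hfp] := choice Hf.
have f0 n x : 0 <= f n x by case: (Hfp n) => _ /(_ x) + _; apply: le_trans.
pose W n := [set x | (((1 + harmonic n)^-1)%:E < (f n x)%:E)%E] `&`
            [set x | sdist F x < harmonic n].
have hp n : (0 < 1 + harmonic n :> R) by rewrite ltr_wpDr ?harmonic_ge0.
have oW n : open (W n).
  apply: openI; last exact: open_sdist_lt.
  by case: (Hfp n) => lf _ _; exact: (lower_semicontinuousP _).1.
have FW n : F `<=` W n.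
  move=> x Fx; split => /=; last by rewrite sdist0 // harmonic_gt0.
  rewrite lte_fin; apply: lt_le_trans (_ : 1 <= f n x).
    by rewrite invf_lt1 // ltrDl harmonic_gt0.
  case: (Hfp n) => _ /(_ x) + _; by rewrite indicE mem_set // normr1.
have Hk : forall n, exists k : T -> R, [/\ continuous k, (forall x, 0 <= k x <= 1),
     (forall x, F x -> k x = 1) & (forall x, ~ W n x -> k x = 0)].
  by move=> n; apply: urysohn.
have [k Hkp] := choice Hk.
have k01 n x : 0 <= k n x <= 1 by case: (Hkp n) => _ + _ _; apply.
have Fk n x : \1_F x <= k n x.
  have [Fx|Fx] := pselect (F x).
    by case: (Hkp n) => _ _ /(_ x Fx) -> _; rewrite indicE mem_set.
  by rewrite indicE memNset //; case/andP: (k01 n x).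
have gF n x : \1_F x <= runmin k n x by apply: runmin_lb => m; exact: Fk.
have g1 n x : runmin k n x <= 1.
  by apply: le_trans (runmin_le k n x) _; case/andP: (k01 n x).
have g0 n x : 0 <= runmin k n x := le_trans (indic_ge0 F x) (gF n x).
exists (runmin k); split => //.
- by move=> n; apply: runmin_cont => m; case: (Hkp m).
- by move=> n x; exact: runmin_mono.
- move=> x; have [Fx|Fx] := pselect (F x).
    rewrite indicE mem_set //; apply: cvg_near_cst; apply: nearW => n.
    by apply/le_anti; rewrite g1 /=; have := gF n x; rewrite indicE mem_set.
  rewrite indicE memNset //; apply: cvg_near_cst.
  have rho0 : 0 < sdist F x.
    have := @sdist_open_pos (~` F) x (closed_openC cF) Fx.
    by rewrite setCK; apply.
  near=> n; apply/le_anti; rewrite g0 andbT.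
  apply: le_trans (runmin_le k n x) _.
  case: (Hkp n) => _ _ _ -> //; move=> [_ /=]; apply/negP; rewrite -leNgt ltW //.
  near: n; exact: (cvgr_lt _ cvg_harmonic).
- rewrite Jr.
  apply: (@squeeze_cvge _ _ _ _ (fun _ => r%:E) _
     (fun n => ((1 + harmonic n) * (r + harmonic n))%:E)).
  + apply: nearW => n; apply/andP; split.
      rewrite -Jr; apply: cap_ext_mono => x.
      by rewrite !ger0_norm ?indic_ge0.
    apply: le_trans (@cap_ext_le _ \1_(W n) _ _) _.
    * exact: lsc_indic.
    * move=> x; rewrite ger0_norm //; apply: le_trans (runmin_le k n x) _.
      have [Wx|Wx] := pselect (W n x).
        by rewrite indicE mem_set //; case/andP: (k01 n x).
      by case: (Hkp n) => _ _ _ ->; rewrite // indicE memNset.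
    * apply: (@cap_lsc_scale (f n)); [exact: hp | exact: indic_ge0 | |].
        move=> x; have [Wx|Wx] := pselect (W n x); last first.
          by rewrite indicE memNset // mulr_ge0 ?(ltW (hp n)).
        rewrite indicE mem_set //; case: Wx => /= + _; rewrite lte_fin => h.
        have e : (1 + harmonic n) * (1 + harmonic n)^-1 = 1 :> R.
          by rewrite mulfV // gt_eqF.
        rewrite -{1}e; apply: ler_wpM2l; [exact: ltW (hp n) | exact: ltW h].
      by case: (Hfp n) => _ _ /ltW.
  + exact: cvg_cst.
  + apply: cvg_EFin; first exact: nearW.
    have := cvgM (cvgD (cvg_cst (1:R)) (@cvg_harmonic R)) (cvgD (cvg_cst r) (@cvg_harmonic R)).
    by rewrite !addr0 mul1r; apply.
Unshelve. all: end_near.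
Qed.

End main.

Theorem proposition2p2 (R : realType) (T : topologicalType)
    (L : set (T -> R)) (c : (T -> R) -> R) :
  @metrizable_space R T -> @separable_space T ->
  Cb_lattice L -> generates_topology L -> capacity L c ->
  (forall V : set T, open V ->
     exists h : nat -> T -> R,
       [/\ (forall n, continuous (h n)),
           (forall n x, 0 <= h n x),
           (forall n x, h n x <= h n.+1 x),
           (forall x, h n x @[n --> \oo] --> (\1_V x : R)) &
           cap_ext L c (h n) @[n --> \oo] --> cap_ext L c (\1_V : T -> R)]) /\
  (forall F : set T, closed F ->
     exists g : nat -> T -> R,
       [/\ (forall n, continuous (g n)),
           (forall n x, g n x <= 1),
           (forall n x, g n.+1 x <= g n x),
           (forall x, g n x @[n --> \oo] --> (\1_F x : R)) &
           cap_ext L c (g n) @[n --> \oo] --> cap_ext L c (\1_F : T -> R)]).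

Proof.
move=> [d [d0 dE dC dT dO]] _ HL _ Hc; split.
- by move=> V oV; apply: (@part_i R T d L c).
- by move=> F cF; apply: (@part_ii R T d L c).
Qed.
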